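(* Let $P,R\in\mathrm{Sym}(n,\mathbb{R})$, $Q\in\mathrm{Mat}(n,\mathbb{R})$ with $\langle Pv,v\rangle\ge C_1|v|^2$ for some $C_1>0$ and all $v$. For $\lambda\in\mathbb{R}$ let $B_\lambda=\begin{bmatrix}P^{-1}&-P^{-1}Q\\-Q^TP^{-1}&Q^TP^{-1}Q-R-\lambda I_n\end{bmatrix}$ and $J=\begin{bmatrix}0&-I_n\\ I_n&0\end{bmatrix}$. If $JB_0$ is hyperbolic, then $JB_\lambda$ is hyperbolic for every $\lambda\ge0$.
   Context: A real matrix is hyperbolic if it has no eigenvalue on the imaginary axis. *)

(* Defs.v *)
From HB Require Import structures.
From mathcomp Require Import all_boot all_order all_algebra.
From mathcomp Require Import complex.
Set Implicit Arguments. Unset Strict Implicit. Unset Printing Implicit Defensive.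
Import Order.TTheory GRing.Theory Num.Theory.
Local Open Scope ring_scope.

(* The real numbers are modelled by an arbitrary real closed field R
   (this includes the reals); complex numbers are R[i] = complex R. *)

Definition cplx_mx (R : rcfType) (m : nat) (M : 'M[R]_m) : 'M[R[i]]_m :=
  map_mx (real_complex R) M.

Definition hyperbolic (R : rcfType) (m : nat) (M : 'M[R]_m) : Prop :=
  forall z : R[i], eigenvalue (cplx_mx M) z -> complex.Re z != 0.

Definition Jmx (R : rcfType) (n : nat) : 'M[R]_(n + n) :=
  block_mx 0 (- 1%:M) 1%:M 0.

Definition Bmx (R : rcfType) (n : nat) (P Q Rm : 'M[R]_n) (lam : R)
  : 'M[R]_(n + n) :=
  block_mx (invmx P) (- (invmx P *m Q))
           (- (Q^T *m invmx P)) (Q^T *m invmx P *m Q - Rm - lam%:M).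

Definition inner (R : rcfType) (n : nat) (u v : 'cV[R]_n) : R :=
  \sum_(i < n) u i 0 * v i 0.

(* Main.v *)
Require Import Defs.
From HB Require Import structures.
From mathcomp Require Import all_boot all_order all_algebra.
From mathcomp Require Import complex polyrcf.
From mathcomp Require Import ring.
Import Order.TTheory GRing.Theory Num.Theory.
Local Open Scope ring_scope.
Set Implicit Arguments. Unset Strict Implicit.

Lemma char_poly_conj (F : fieldType) n (P D : 'M[F]_n) :
  P \in unitmx -> char_poly (invmx P *m D *m P) = char_poly D.
Proof.
move=> uP; rewrite /char_poly /char_poly_mx.
set P' := map_mx polyC P.
have uP' : P' \in unitmx by rewrite map_unitmx.
rewrite !map_mxM map_invmx -/P'.
have eX : ('X%:M : 'M[{poly F}]_n) = invmx P' *m 'X%:M *m P'.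
  by rewrite mul_mx_scalar -scalemxAl mulVmx // scalemx1.
rewrite {1}eX.
by rewrite -mulmxBl -mulmxBr !det_mulmx mulrC mulrA -det_mulmx mulmxV // det1 mul1r.
Qed.

Lemma herm_char_split (C : numClosedFieldType) n (A : 'M[C]_n) :
  A \is hermsymmx -> exists2 s : seq C, all (fun x => x \is Num.real) s &
    char_poly A = \prod_(x <- s) ('X - x%:P).
Proof.
move=> hA; have := hermitian_spectral_diag_real hA.
have /hermitian_normalmx/orthomx_spectralP eA := hA.
move=> /mxOverP dr.
exists [seq (spectral_diag A) 0 i | i <- enum 'I_n].
  by apply/allP => x /mapP [i _ ->]; apply: dr.
rewrite {1}eA char_poly_conj ?spectral_unit // char_poly_trig ?diag_mx_is_trig //.
rewrite big_map big_enum /=; apply: eq_bigr => i _.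
by rewrite mxE eqxx mulr1n.
Qed.

Lemma prod_XsubC_real (C : numDomainType) (s : seq C) :
  all (fun x => x \is Num.real) s ->
  forall k, (\prod_(x <- s) ('X - x%:P))`_k \is Num.real.
Proof.
elim: s => [_ k|x s IH /= /andP [xr sr] k].
  by rewrite big_nil coef1; case: (k == 0)%N.
rewrite big_cons mulrBl coefB coefXM coefCM.
apply: realB; first by case: (k == 0)%N; [exact: real0 | exact: IH sr _].
by apply: realM => //; apply: IH sr _.
Qed.

Lemma prod_XsubC_pos (C : numDomainType) (s : seq C) :
  all (fun x => x < 0) s ->
  forall k, 0 <= (\prod_(x <- s) ('X - x%:P))`_k /\
            ((k <= size s)%N -> 0 < (\prod_(x <- s) ('X - x%:P))`_k).
Proof.
elim: s => [_ k|x s IH /= /andP [xn sn] k].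
  rewrite big_nil coef1; case: k => [|k] //=; split => //; exact: ltr01.
rewrite big_cons mulrBl coefB coefXM coefCM.
have nx : 0 < - x by rewrite oppr_gt0.
case: k => [|k] /=.
  rewrite sub0r -mulNr; have [h1 h2] := IH sn 0%N.
  have h3 := h2 (leq0n _).
  by split; [apply: mulr_ge0; [exact: ltW|] | move=> _; apply: mulr_gt0].
have [h1 h2] := IH sn k; have [h3 _] := IH sn k.+1.
rewrite -mulNr; split.
  by apply: addr_ge0 => //; apply: mulr_ge0 => //; exact: ltW.
move=> hk; apply: ltr_pwDl; first exact: h2.
by apply: mulr_ge0 => //; exact: ltW.
Qed.

Lemma coef_ge0_horner_gt0 (C : numDomainType) (p : {poly C}) t :
  (forall k, 0 <= p`_k) -> 0 < p`_0 -> 0 <= t -> 0 < p.[t].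
Proof.
move=> hk h0 ht; rewrite horner_coef.
have : (0 < size p)%N.
  rewrite lt0n size_poly_eq0; apply/eqP => p0; move: h0; rewrite p0 coef0.
  by rewrite ltxx.
case: (size p) => // m _; rewrite big_ord_recl expr0 mulr1.
apply: ltr_pwDl => //; apply: sumr_ge0 => i _; apply: mulr_ge0 => //.
exact: exprn_ge0.
Qed.

Lemma horner_char_poly (F : comNzRingType) n (A : 'M[F]_n) x :
  (char_poly A).[x] = \det (x%:M - A).
Proof.
rewrite /char_poly -horner_evalE -(det_map_mx (horner_eval x)).
congr (\det _); apply/matrixP => i j; rewrite !mxE /= horner_evalE !hornerE.
by rewrite hornerMn hornerX.
Qed.

Lemma hermN (C : numClosedFieldType) n (A : 'M[C]_n) :
  A \is hermsymmx -> - A \is hermsymmx.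
Proof.
move=> /is_hermitianmxP hA; apply/is_hermitianmxP.
rewrite expr0 !scale1r; apply/matrixP => i j; rewrite !mxE.
by rewrite rmorphN {1}hA expr0 scale1r !mxE.
Qed.

Lemma herm_coef_pos (C : numClosedFieldType) n (A : 'M[C]_n) :
  A \is hermsymmx -> (forall t : C, 0 <= t -> \det (t%:M + A) != 0) ->
  forall k, (k <= n)%N -> 0 < (char_poly (- A))`_k.
Proof.
move=> hA hdet k hk.
have [s sr es] := herm_char_split (hermN hA).
have sn : all (fun x => x < 0) s.
  apply/allP => x xs; have xr : x \is Num.real by apply: (allP sr).
  rewrite real_ltNge ?real0 //; apply/negP => x0.
  have := hdet x x0; rewrite -[A]opprK -horner_char_poly es.
  rewrite horner_prod prodf_seq_eq0 /= => /negP; apply; apply/hasP; exists x => //.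
  by rewrite !hornerE subrr.
have hs : size s = n.
  by have := size_char_poly (- A); rewrite es size_prod_XsubC => -[].
rewrite es; apply: (prod_XsubC_pos sn k).2; rewrite hs //.
Qed.

Definition famp (C : comNzRingType) n (A0 A1 A2 : 'M[C]_n) : 'M[{poly C}]_n :=
  map_mx polyC A0 + 'X *: map_mx polyC A1 + 'X^2 *: map_mx polyC A2.

Lemma famp_eval (C : comNzRingType) n (A0 A1 A2 : 'M[C]_n) x :
  map_mx (horner_eval x) (famp A0 A1 A2) = A0 + x *: A1 + x^+2 *: A2.
Proof.
by apply/matrixP => i j; rewrite !mxE /= horner_evalE !hornerE.
Qed.

Lemma fam_coef (C : comNzRingType) n (A0 A1 A2 : 'M[C]_n) k x :
  (char_poly (- (A0 + x *: A1 + x^+2 *: A2)))`_k =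
  ((char_poly (- famp A0 A1 A2))`_k).[x].
Proof.
by rewrite -famp_eval -map_mxN -map_char_poly coef_map /= horner_evalE.
Qed.

Definition Repoly (R : rcfType) (E : {poly R[i]}) : {poly R} :=
  \poly_(i < size E) complex.Re E`_i.

Lemma Repoly_horner (R : rcfType) (E : {poly R[i]}) (s : R) :
  complex.Re (E.[real_complex R s]) = (Repoly E).[s].
Proof.
rewrite horner_coef (horner_coef_wide _ (size_poly _ _)) raddf_sum /=.
apply: eq_bigr => i _; rewrite coef_poly ltn_ord -rmorphXn /=.
by case: (E`_i) => a b /=; rewrite mulr0 subr0.
Qed.

Lemma coef0_charN (F : comNzRingType) n (A : 'M[F]_n) :
  (char_poly (- A))`_0 = \det A.
Proof.
by rewrite char_poly_det -scaleN1r detZ mulrA -exprMn mulrNN mulr1 expr1n mul1r.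
Qed.

Lemma lt0C (R : rcfType) (x : R) : (0 < real_complex R x) = (0 < x).
Proof. exact: (ltcR 0 x). Qed.

Lemma le0C (R : rcfType) (x : R) : (0 <= real_complex R x) = (0 <= x).
Proof. exact: (lecR 0 x). Qed.

Lemma first_root (R : rcfType) (p : {poly R}) a b x :
  p.[a] != 0 -> x \in `[a, b] -> root p x ->
  exists s, [/\ a < s, s <= b, root p s & forall z, a < z < s -> ~~ root p z].
Proof.
move=> pa xab rx.
have p0 : p != 0 by apply: contraNneq pa => ->; rewrite hornerC.
have xa : x != a by apply: contraNneq pa => <-; exact: rx.
have ax : a < x by rewrite lt_neqAle eq_sym xa (itvP xab).
have xb : x <= b by rewrite (itvP xab).
case: (next_rootP p a b).
- by move=> p00; rewrite p00 eqxx in p0.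
- move=> y _ py hy hno; exists y; split; rewrite ?(itvP hy) ?rootE ?py //.
- move=> c _ _ hno; exists x; split => //.
  move=> z /andP [az zx]; apply: hno; rewrite in_itv /= az.
  exact: lt_le_trans zx xb.
Qed.

Definition famH (R : rcfType) n (A0 A1 A2 : 'M[R[i]]_n) (s : R) : 'M[R[i]]_n :=
  A0 + real_complex R s *: A1 + real_complex R s ^+ 2 *: A2.

Lemma cf_F (R : rcfType) n (A0 A1 A2 : 'M[R[i]]_n) k s :
  famH A0 A1 A2 s \is hermsymmx ->
  (char_poly (- famH A0 A1 A2 s))`_k =
  real_complex R ((Repoly ((char_poly (- famp A0 A1 A2))`_k)).[s]).
Proof.
move=> hH.
have [l lr el] := herm_char_split (hermN hH).
have hr := prod_XsubC_real lr k; rewrite -el in hr.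
rewrite -Repoly_horner -fam_coef -/(famH A0 A1 A2 s).
by rewrite RRe_real.
Qed.

Lemma pos_at (R : rcfType) n (A0 A1 A2 : 'M[R[i]]_n) s :
  famH A0 A1 A2 s \is hermsymmx -> \det (famH A0 A1 A2 s) != 0 ->
  (forall k, (k <= n)%N -> 0 <= (char_poly (- famH A0 A1 A2 s))`_k) ->
  forall k, (k <= n)%N -> 0 < (char_poly (- famH A0 A1 A2 s))`_k.
Proof.
move=> hH hd hk; apply: herm_coef_pos => // t t0.
rewrite -[famH _ _ _ _]opprK -horner_char_poly; apply: lt0r_neq0.
apply: coef_ge0_horner_gt0 => //.
  move=> k; case: (leqP k n) => kn; first exact: hk.
  by rewrite nth_default // size_char_poly.
by rewrite lt_def coef0_charN hd /= -coef0_charN; apply: hk.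
Qed.


Lemma core (R : rcfType) n (A0 A1 A2 : 'M[R[i]]_n) (b : R) :
  (forall s, famH A0 A1 A2 s \is hermsymmx) -> 0 <= b ->
  (forall s, 0 <= s -> s <= b -> \det (famH A0 A1 A2 s) != 0) ->
  (forall k, (k <= n)%N -> 0 < (char_poly (- famH A0 A1 A2 0))`_k) ->
  forall k, (k <= n)%N -> 0 < (char_poly (- famH A0 A1 A2 b))`_k.
Proof.
move=> hH b0 hdet h0.
pose F k := Repoly ((char_poly (- famp A0 A1 A2))`_k).
have cfF k s : (char_poly (- famH A0 A1 A2 s))`_k = real_complex R ((F k).[s]).
  exact: cf_F.
have F0 k : (k <= n)%N -> 0 < (F k).[0] by move=> kn; rewrite -lt0C -cfF h0.
suff allb : forall k : 'I_n.+1, 0 < (F k).[b].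
  by move=> k kn; rewrite cfF lt0C (allb (Ordinal (kn : (k < n.+1)%N))).
have Hall s : 0 <= s -> s <= b -> (forall k : 'I_n.+1, 0 <= (F k).[s]) ->
    forall k : 'I_n.+1, 0 < (F k).[s].
  move=> s0 sb hs k; rewrite -lt0C -cfF; apply: pos_at; [exact: hH | exact: hdet | | by rewrite -ltnS].
  move=> j jn; rewrite cfF le0C; exact: (hs (Ordinal (jn : (j < n.+1)%N))).
pose G := \prod_(k < n.+1) F k.
have rootG (k : 'I_n.+1) z : root (F k) z -> root G z.
  by move=> rz; rewrite /root /G horner_prod (bigD1 k) //= (eqP rz) mul0r.
have G0 : G.[0] != 0.
  rewrite /G horner_prod; apply: lt0r_neq0; apply: prodr_gt0 => k _.
  by apply: F0; rewrite -ltnS.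
case: (boolP [forall k : 'I_n.+1, 0 < (F k).[b]]) => [/forallP //|].
move=> /forallPn [k0]; rewrite -leNgt => hk0.
have [|x xab rx] := @polyrcf.poly_ivt _ (F k0) 0 b b0.
  by rewrite pmulr_rle0 //; apply: F0; rewrite -ltnS.
have [s' [s'0 s'b rs' hno]] := first_root G0 xab (rootG _ _ rx).
have hs' : forall k : 'I_n.+1, 0 <= (F k).[s'].
  move=> k; rewrite leNgt; apply/negP => hneg.
  have [z zs rz] : {z | z \in `[0, s'] & root (F k) z}.
    apply: polyrcf.poly_ivt; first exact: ltW.
    rewrite pmulr_rle0; [exact: ltW | apply: F0; rewrite -ltnS //].
  have z0 : 0 < z.
    rewrite lt_neqAle (itvP zs) andbT; apply/eqP => ez.
    by move: rz; rewrite -ez /root; apply/negP; apply: lt0r_neq0; apply: F0; rewrite -ltnS.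
  have zs' : z < s'.
    rewrite lt_neqAle (itvP zs) andbT; apply/eqP => ez.
    by move: rz; rewrite ez /root (lt_eqF hneg).
  have := hno z; rewrite z0 zs' => /(_ isT).
  by rewrite (rootG _ _ rz).
have := Hall s' (ltW s'0) s'b hs'.
move: rs'; rewrite /root /G horner_prod => /prodf_eq0 [k _] /eqP Fk0 hall.
by move: (hall k); rewrite Fk0 ltxx.
Qed.

Definition Wmx (F : fieldType) n (Pc Qc Rc : 'M[F]_n) (l z : F) :=
  Rc + l%:M - z ^+ 2 *: Pc + z *: (Qc^T - Qc).

Lemma eig_ker (F : fieldType) n (Pc Qc Rc : 'M[F]_n) (l z : F) :
  Pc \in unitmx ->
  eigenvalue (block_mx 0 (- 1%:M) 1%:M 0 *m
     block_mx (invmx Pc) (- (invmx Pc *m Qc)) (- (Qc^T *m invmx Pc))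
              (Qc^T *m invmx Pc *m Qc - Rc - l%:M)) z =
  (\det (Wmx Pc Qc Rc l z) == 0).
Proof.
move=> uP; set Pi := invmx Pc.
have PiP : Pi *m Pc = 1%:M by rewrite mulVmx.
have PPi : Pc *m Pi = 1%:M by rewrite mulmxV.
apply/eigenvalueP/det0P.
- move=> [v hv v0].
  rewrite -(hsubmxK v) in hv v0; move: hv v0.
  set v1 := lsubmx v; set v2 := rsubmx v.
  rewrite mulmxA mul_row_block !mulmx0 !mulmxN !mulmx1 !add0r !addr0.
  rewrite mul_row_block scale_row_mx => /eq_row_mx [e1 e2] v0.
  have e1' : v2 *m Pi + v1 *m Qc^T *m Pi = z *: v1.
    by rewrite -e1 mulNmx mulmxN opprK mulmxA.
  have ev2 : v2 = z *: v1 *m Pc - v1 *m Qc^T.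
    by rewrite -e1' -mulmxDl -mulmxA PiP mulmx1 addrK.
  have e3 : v2 *m Pi *m Qc + v1 *m Qc^T *m Pi *m Qc = z *: (v1 *m Qc).
    by rewrite -mulmxDl e1' scalemxAl.
  have e2' : v1 *m (Rc + l%:M) = z *: v2 + z *: (v1 *m Qc).
    rewrite -e2 -e3 mulmxN mulNmx !mulmxBr !mulmxA.
    by rewrite mulmxDr; apply/rowP => j; rewrite !mxE; ring.
  exists v1.
    apply: contraNneq v0 => v10; move: ev2; rewrite v10 scaler0 !mul0mx subr0.
    by move=> ->; rewrite row_mx0.
  rewrite /Wmx mulmxDr mulmxBr e2' ev2 -!scalemxAr !mulmxBr -!scalemxAl.
  by apply/rowP => j; rewrite !mxE; ring.
- move=> [v1 v10 hW].
  pose v2 := z *: v1 *m Pc - v1 *m Qc^T.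
  exists (row_mx v1 v2); last first.
    by apply/negP; rewrite -row_mx0 => /eqP /eq_row_mx [h _]; rewrite h eqxx in v10.
  have e1 : v2 *m Pi + v1 *m Qc^T *m Pi = z *: v1.
    by rewrite /v2 mulmxBl subrK -mulmxA PPi mulmx1.
  have e3 : v2 *m Pi *m Qc = z *: (v1 *m Qc) - v1 *m Qc^T *m Pi *m Qc.
    by rewrite scalemxAl -e1 mulmxDl addrK.
  rewrite mulmxA mul_row_block !mulmx0 !mulmxN !mulmx1 !add0r !addr0.
  rewrite mul_row_block scale_row_mx; congr row_mx.
    by rewrite mulNmx mulmxN opprK mulmxA.
  apply/eqP; rewrite -subr_eq0; apply/eqP; rewrite -hW.
  rewrite mulmxN mulNmx !mulmxBr !mulmxA e3 /v2 /Wmx mulmxDr mulmxBr.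
  rewrite -!scalemxAr !mulmxBr -!scalemxAl mulmxDr.
  by apply/rowP => j; rewrite !mxE; ring.
Qed.

Lemma hermE (C : numClosedFieldType) n (A : 'M[C]_n) :
  A \is hermsymmx -> forall i j, A i j = (A j i)^*.
Proof. by move=> /is_hermitianmxP h i j; rewrite {1}h expr0 scale1r !mxE. Qed.

Lemma hermI (C : numClosedFieldType) n (A : 'M[C]_n) :
  (forall i j, A i j = (A j i)^*) -> A \is hermsymmx.
Proof.
by move=> h; apply/is_hermitianmxP; rewrite expr0 scale1r; apply/matrixP => i j; rewrite !mxE.
Qed.

Lemma realC (R : rcfType) (x : R) : real_complex R x \is Num.real.
Proof. by apply/complex_realP; exists x. Qed.

Lemma conjC_C (R : rcfType) (x : R) : (real_complex R x)^* = real_complex R x.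
Proof. exact: conj_Creal (realC x). Qed.

Lemma herm_cplx (R : rcfType) n (A : 'M[R]_n) : A^T = A -> cplx_mx A \is hermsymmx.
Proof.
move=> hA; apply: hermI => i j; rewrite !mxE conjC_C.
by rewrite -{1}hA mxE.
Qed.

Lemma herm_iK (R : rcfType) n (Q : 'M[R]_n) :
  'i *: ((cplx_mx Q)^T - cplx_mx Q) \is hermsymmx.
Proof.
have ci : (('i : R[i])^* = - 'i) := conjCi _.
apply: hermI => i j; rewrite !mxE rmorphM rmorphB /= ci !conjC_C; ring.
Qed.

Lemma famH_herm (R : rcfType) n (A0 A1 A2 : 'M[R[i]]_n) s :
  A0 \is hermsymmx -> A1 \is hermsymmx -> A2 \is hermsymmx ->
  famH A0 A1 A2 s \is hermsymmx.
Proof.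
move=> /hermE h0 /hermE h1 /hermE h2; apply: hermI => i j.
by rewrite !mxE !rmorphD !rmorphM /= !conjC_C -h0 -h1 -h2 expr2.
Qed.

Lemma inner_scale (R : rcfType) n (c : R) (v w : 'cV[R]_n) :
  inner (c *: v) w = c * inner v w.
Proof. by rewrite /inner mulr_sumr; apply: eq_bigr => i _; rewrite mxE mulrA. Qed.

Lemma inner_gt0 (R : rcfType) n (v : 'cV[R]_n) : v != 0 -> 0 < inner v v.
Proof.
move=> v0; rewrite lt_def; have ge : forall i : 'I_n, 0 <= v i 0 * v i 0.
  by move=> i; rewrite -expr2 sqr_ge0.
rewrite sumr_ge0 // andbT; apply: contraNneq v0 => /eqP.
rewrite psumr_eq0 // => /allP h; apply/eqP/matrixP => i j; rewrite ord1 mxE.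
by have := h i (mem_index_enum _); rewrite mulf_eq0 orbb => /eqP.
Qed.

Lemma posdef_unit (R : rcfType) n (P : 'M[R]_n) C1 :
  P^T = P -> 0 < C1 -> (forall v, C1 * inner v v <= inner (P *m v) v) ->
  forall t, 0 <= t -> (P + t%:M) \in unitmx.
Proof.
move=> hP C1p hC t t0; rewrite unitmxE unitfE; apply/negP => /det0P [v v0 hv].
have hw : P *m v^T = (- t) *: v^T.
  have : v *m P = - (t *: v) by apply/eqP; rewrite -addr_eq0 -mul_mx_scalar -mulmxDr hv.
  by move=> /(congr1 trmx); rewrite trmx_mul hP => ->; rewrite linearN /= scaleNr linearZ.
have := hC v^T; rewrite hw inner_scale.
have vt : v^T != 0.
  apply: contraNneq v0 => h; apply/eqP; rewrite -[v]trmxK h; exact: trmx0.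
have := inner_gt0 vt => s0; rewrite ler_pM2r // => h.
by have := lt_le_trans C1p h; rewrite oppr_gt0 ltNge t0.
Qed.

Lemma scalar0 (C : pzRingType) n : (0%:M : 'M[C]_n) = 0.
Proof. by apply/matrixP => i j; rewrite !mxE mul0rn. Qed.

Lemma cplxJB (R : rcfType) n (P Q Rm : 'M[R]_n) l :
  cplx_mx (Jmx R n *m Bmx P Q Rm l) =
  block_mx 0 (- 1%:M) 1%:M 0 *m
     block_mx (invmx (cplx_mx P)) (- (invmx (cplx_mx P) *m cplx_mx Q))
              (- ((cplx_mx Q)^T *m invmx (cplx_mx P)))
              ((cplx_mx Q)^T *m invmx (cplx_mx P) *m cplx_mx Q - cplx_mx Rm
                 - (real_complex R l)%:M).
Proof.
rewrite /cplx_mx /Jmx /Bmx map_mxM !map_block_mx !map_mxN map_mx0 map_mx1.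
by rewrite !map_mxB !map_mxM map_invmx map_trmx map_scalar_mx.
Qed.

Lemma W_famH (R : rcfType) n (Pc Qc Rc : 'M[R[i]]_n) (l w : R) :
  Wmx Pc Qc Rc (real_complex R l) ('i * real_complex R w) =
  famH Rc ('i *: (Qc^T - Qc)) Pc w + (real_complex R l)%:M.
Proof.
apply/matrixP => i j; rewrite /Wmx /famH !mxE exprMn sqrCi; ring.
Qed.

Lemma famH0 (R : rcfType) n (A0 A1 A2 : 'M[R[i]]_n) : famH A0 A1 A2 0 = A0.
Proof. by rewrite /famH rmorph0 expr0n /= !scale0r !addr0. Qed.

Lemma famH_neg (R : rcfType) n (A0 A1 A2 : 'M[R[i]]_n) s :
  famH A0 A1 A2 s = famH A0 (- A1) A2 (- s).
Proof. by apply/matrixP => i j; rewrite /famH !mxE rmorphN; ring. Qed.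

Lemma famH_inv (R : rcfType) n (A0 A1 A2 : 'M[R[i]]_n) u : u != 0 ->
  famH A0 A1 A2 u = (real_complex R u) ^+ 2 *: famH A2 A1 A0 u^-1.
Proof.
move=> u0; have uc : real_complex R u != 0 by rewrite fmorph_eq0.
apply/matrixP => i j; rewrite /famH !mxE fmorphV; field; exact: uc.
Qed.

Lemma famH_shift (R : rcfType) n (A0 A1 A2 : 'M[R[i]]_n) w l : w != 0 ->
  famH A0 A1 A2 w + (real_complex R l)%:M =
  (real_complex R w) ^+ 2 *: ((real_complex R (l / w ^+ 2))%:M + famH A2 A1 A0 w^-1).
Proof.
move=> w0; have wc : real_complex R w != 0 by rewrite fmorph_eq0.
apply/matrixP => i j; rewrite /famH !mxE !fmorphV rmorphM /= fmorphV rmorphXn.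
by field; exact: wc.
Qed.

Lemma detC_ne0 (R : rcfType) n (A : 'M[R]_n) : A \in unitmx -> \det (cplx_mx A) != 0.
Proof. by rewrite /cplx_mx det_map_mx fmorph_eq0 -unitfE -unitmxE. Qed.

Lemma det_pos_shift (C : numDomainType) n (H : 'M[C]_n) :
  (forall k, (k <= n)%N -> 0 < (char_poly (- H))`_k) ->
  forall t, 0 <= t -> \det (t%:M + H) != 0.
Proof.
move=> hk t t0; rewrite -[H]opprK -horner_char_poly; apply: lt0r_neq0.
apply: coef_ge0_horner_gt0 => //; last exact: hk.
move=> k; case: (leqP k n) => kn; first exact/ltW/hk.
by rewrite nth_default // size_char_poly.
Qed.

Unset Implicit Arguments.

Theorem lemma2p3 (R : rcfType) (n : nat) (P Q Rm : 'M[R]_n) :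
  P^T = P -> Rm^T = Rm ->
  (exists C1 : R, 0 < C1 /\
     forall v : 'cV[R]_n, C1 * inner v v <= inner (P *m v) v) ->
  hyperbolic (Jmx R n *m Bmx P Q Rm 0) ->
  forall lam : R, 0 <= lam -> hyperbolic (Jmx R n *m Bmx P Q Rm lam).
Proof.
move=> hP hR [C1 [C1p hC]] hyp0 lam lam0.
have Pu := posdef_unit hP C1p hC.
have Pu0 : P \in unitmx by have := Pu 0 (lexx _); rewrite scalar0 addr0.
set Pc := cplx_mx P; set Qc := cplx_mx Q; set Rc := cplx_mx Rm.
set K := 'i *: (Qc^T - Qc).
have Pcu : Pc \in unitmx by rewrite map_unitmx.
have hK : K \is hermsymmx := herm_iK Q.
have hPc : Pc \is hermsymmx := herm_cplx hP.
have hRc : Rc \is hermsymmx := herm_cplx hR.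
have h3 : forall w : R, \det (famH Rc K Pc w) != 0.
  move=> w; apply/negP => /eqP hd.
  have := hyp0 ('i * real_complex R w).
  rewrite cplxJB eig_ker // W_famH (_ : real_complex R 0 = 0) // scalar0 addr0 -/Pc -/Qc -/Rc -/K hd eqxx.
  move=> /(_ isT); rewrite -complexiE /= mul0r mulr0 subrr eqxx //.
have h4 : forall u : R, u != 0 -> \det (famH Pc K Rc u) != 0.
  by move=> u u0; rewrite famH_inv // detZ mulf_neq0 ?expf_neq0 ?fmorph_eq0 ?h3.
have hPpos : forall k, (k <= n)%N -> 0 < (char_poly (- Pc))`_k.
  apply: herm_coef_pos; first exact: hPc.
  move=> t t0.
  have [r er] : exists r, t = real_complex R r by apply/complex_realP/ger0_real.
  subst t; move: t0; rewrite le0C => r0.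
  rewrite addrC -map_scalar_mx -map_mxD; apply: detC_ne0; exact: Pu.
have hNpos : forall u k, (k <= n)%N -> 0 < (char_poly (- famH Pc K Rc u))`_k.
  move=> u; case: (leP 0 u) => u0.
    apply: core.
    - by move=> s; apply: famH_herm.
    - exact: u0.
    - move=> s s0 _; case: (eqVneq s 0) => [->|sn0]; last exact: h4.
      by rewrite famH0; apply: detC_ne0.
    - by rewrite famH0.
  rewrite famH_neg; apply: core; first by move=> s; apply: famH_herm => //; apply: hermN.
  - by rewrite oppr_ge0 ltW.
  - move=> s s0 _; rewrite -[s]opprK -famH_neg; case: (eqVneq s 0) => [->|sn0].
      by rewrite oppr0 famH0; apply: detC_ne0.
    by apply: h4; rewrite oppr_eq0.
  - by rewrite famH0.
have h6 : forall w l : R, w != 0 -> 0 <= l ->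
    \det (famH Rc K Pc w + (real_complex R l)%:M) != 0.
  move=> w l w0 l0; rewrite famH_shift // detZ mulf_neq0 ?expf_neq0 ?fmorph_eq0 //.
  apply: det_pos_shift; first exact: hNpos.
  by rewrite le0C divr_ge0 // sqr_ge0.
have hMpos : forall s : R, s != 0 -> forall k, (k <= n)%N ->
    0 < (char_poly (- famH Rc K Pc s))`_k.
  move=> s s0; apply: herm_coef_pos; first exact: famH_herm.
  move=> t t0.
  have [r er] : exists r, t = real_complex R r by apply/complex_realP/ger0_real.
  subst t; move: t0; rewrite le0C => r0.
  by rewrite addrC; apply: h6.
pose FM k := Repoly ((char_poly (- famp Rc K Pc))`_k).
have cfM : forall k s, (char_poly (- famH Rc K Pc s))`_k = real_complex R ((FM k).[s]).
  by move=> k s; apply: cf_F; apply: famH_herm.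
have FM0 : forall k, (k <= n)%N -> 0 <= (FM k).[0].
  move=> k kn; rewrite leNgt; apply/negP => hneg.
  have [|z z01 rz] := @polyrcf.poly_ivt _ (FM k) 0 1 ler01.
    apply: ltW; rewrite nmulr_rlt0 // -lt0C -cfM; exact: hMpos (oner_neq0 _) k kn.
  have z0 : z != 0 by apply: contraTneq rz => ->; rewrite /root (lt_eqF hneg).
  by have := hMpos z z0 k kn; rewrite cfM lt0C (eqP rz) ltxx.
have hR0 : forall k, (k <= n)%N -> 0 < (char_poly (- famH Rc K Pc 0))`_k.
  apply: pos_at; first exact: famH_herm.
    exact: h3.
  by move=> k kn; rewrite cfM le0C; apply: FM0.
have h7 : forall l : R, 0 <= l -> \det (famH Rc K Pc 0 + (real_complex R l)%:M) != 0.
  by move=> l l0; rewrite addrC; apply: det_pos_shift; [exact: hR0 | rewrite le0C].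
move=> z hz; apply/negP => /eqP hre.
have ez : z = 'i * real_complex R (complex.Im z).
  by rewrite {1}[z]complexE hre rmorph0 add0r complexiE.
move: hz; rewrite ez cplxJB eig_ker // W_famH => /eqP hd.
case: (eqVneq (complex.Im z) 0) => [w0|w0].
  by move: (h7 lam lam0); rewrite -w0 => /negP; apply; apply/eqP; exact: hd.
by move: (h6 _ lam w0 lam0) => /negP; apply; apply/eqP; exact: hd.
Qed.
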